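(* Let $\mathcal{X}=\{a_1,\dots,a_n\}$, $\mathcal{Z}=\{b_1,\dots,b_m\}$ be finite and let $\mathcal{Y}=\{c_1,\dots,c_K\}$ be the set of distinct values of $h$. Let $A$ be the $n\times K$ matrix with $A(i,j)=Q(\{z: h(a_i,z)=c_j\})=P(Y_k=c_j\mid X_k=a_i)$, let $T$ be the $n\times n$ transition matrix of the state chain, and let $M=\begin{pmatrix}A & TA & \cdots & T^{n-1}A\end{pmatrix}$, an $n\times nK$ matrix. If $M$ has rank $n$, then the model is $n$ step observable. Furthermore, if $M$ does not have rank $n$, then appending further blocks $T^kA$ with $k\ge n$ to $M$ does not increase its rank.
   Context: Setting: finite state space $\mathcal{X}$, finite noise space $\mathcal{Z}$ with noise law $Q$ (a probability vector), measurement function $h:\mathcal{X}\times\mathcal{Z}\to\mathcal{Y}$. $\{X_k\}$ is a Markov chain with transition matrix $T$, $\{Z_k\}$ i.i.d. with law $Q$ independent of the states, and $Y_k=h(X_k,Z_k)$. For $N\in\mathbb{N}$ let $P(dy_{[1,N]}\mid X_1=x)$ be the conditional law of $(Y_1,\dots,Y_N)$ given $X_1=x$. The model is $N$ step observable if for every function $f:\mathcal{X}\to\mathbb{R}$ and $\epsilon>0$ there is $g:\mathcal{Y}^N\to\mathbb{R}$ with $\max_{x}\left|f(x)-\sum_{y_{[1,N]}}g(y_{[1,N]})P(y_{[1,N]}\mid X_1=x)\right|<\epsilon$. *)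

(* Defs.v *)
From HB Require Import structures.
From mathcomp Require Import all_boot all_order all_algebra.
From mathcomp Require Import reals.
Set Implicit Arguments. Unset Strict Implicit. Unset Printing Implicit Defensive.
Import Order.TTheory GRing.Theory Num.Theory.
Local Open Scope ring_scope.

Definition emis (R : realType) (n : nat) (Z Y : finType) (Q : Z -> R)
  (h : 'I_n -> Z -> Y) (x : 'I_n) (y : Y) : R :=
  \sum_(z : Z | h x z == y) Q z.

(* Conditional law of (Y_1,...,Y_N) given X_1 = x, for the Markov chain with
   transition matrix T (T x x' = P(X_{k+1} = x' | X_k = x)). Index i : 'I_N
   corresponds to time i+1. *)
Definition condlaw (R : realType) (n : nat) (Z Y : finType) (T : 'M[R]_n)
  (Q : Z -> R) (h : 'I_n -> Z -> Y) (N : nat) (x : 'I_n)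
  (y : {ffun 'I_N -> Y}) : R :=
  \sum_(xs : {ffun 'I_N -> 'I_n} | [forall i : 'I_N, (val i == 0%N) ==> (xs i == x)])
    ((\prod_(i : 'I_N) \prod_(j : 'I_N | val j == i.+1) T (xs i) (xs j))
     * \prod_(i : 'I_N) emis Q h (xs i) (y i)).
Arguments condlaw {R n Z Y} T Q h N x y.

Definition n_step_observable (R : realType) (n : nat) (Z Y : finType)
  (T : 'M[R]_n) (Q : Z -> R) (h : 'I_n -> Z -> Y) (N : nat) : Prop :=
  forall (f : 'I_n -> R) (eps : R), 0 < eps ->
    exists g : {ffun 'I_N -> Y} -> R,
      forall x : 'I_n,
        `| f x - \sum_(y : {ffun 'I_N -> Y}) g y * condlaw T Q h N x y | < eps.

Definition Amx (R : realType) (n : nat) (Z Y : finType) (Q : Z -> R)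
  (h : 'I_n -> Z -> Y) : 'M[R]_(n, #|Y|) :=
  \matrix_(i < n, j < #|Y|) emis Q h i (enum_val j).

Definition Mblk (R : realType) (n : nat) (Z Y : finType) (T : 'M[R]_n)
  (Q : Z -> R) (h : 'I_n -> Z -> Y) (N : nat) :
  'M[R]_(n, \sum_(k < N) #|Y|) :=
  \mxrow_(k < N) (T ^+ k *m Amx Q h).

(* Main.v *)
Require Import Defs.
From HB Require Import structures.
From mathcomp Require Import all_boot all_order all_algebra.
From mathcomp Require Import reals.
Set Implicit Arguments. Unset Strict Implicit. Unset Printing Implicit Defensive.
Import Order.TTheory GRing.Theory Num.Theory.
Local Open Scope ring_scope.

Section P1.
Variables (R : realType) (n : nat).

Definition TT N (T : 'M[R]_n) (xs : {ffun 'I_N -> 'I_n}) : R :=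
  \prod_(i : 'I_N) \prod_(j : 'I_N | val j == i.+1) T (xs i) (xs j).

Definition fcons N (a : 'I_n) (t : {ffun 'I_N -> 'I_n}) : {ffun 'I_N.+1 -> 'I_n} :=
  [ffun i => if unlift ord0 i is Some j then t j else a].

Lemma fcons0 N a (t : {ffun 'I_N -> 'I_n}) : fcons a t ord0 = a.
Proof. by rewrite ffunE unlift_none. Qed.

Lemma fconsS N a (t : {ffun 'I_N -> 'I_n}) j : fcons a t (lift ord0 j) = t j.
Proof. by rewrite ffunE liftK. Qed.

Lemma sum_fcons N (F : {ffun 'I_N.+1 -> 'I_n} -> R) :
  \sum_xs F xs = \sum_a \sum_(t : {ffun 'I_N -> 'I_n}) F (fcons a t).
Proof.
rewrite pair_big /= (reindex (fun p : 'I_n * {ffun 'I_N -> 'I_n} => fcons p.1 p.2)) //=.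
exists (fun f : {ffun 'I_N.+1 -> 'I_n} => (f ord0, [ffun j => f (lift ord0 j)])).
  move=> [a t] _ /=; rewrite fcons0; congr pair.
  by apply/ffunP => j; rewrite !ffunE liftK.
move=> f _; apply/ffunP => i; rewrite !ffunE.
by case: unliftP => [j ->|->]; rewrite ?ffunE.
Qed.

Lemma sum_fcons_cond N x (F : {ffun 'I_N.+1 -> 'I_n} -> R) :
  \sum_(xs : {ffun 'I_N.+1 -> 'I_n} | xs ord0 == x) F xs = \sum_(t : {ffun 'I_N -> 'I_n}) F (fcons x t).
Proof.
rewrite big_mkcond sum_fcons (bigD1 x) //= [X in _ + X]big1 ?addr0.
  by apply: eq_bigr => t _; rewrite fcons0 eqxx.
by move=> a /negbTE ha; apply: big1 => t _; rewrite fcons0 ha.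
Qed.

Lemma cond_eq N (xs : {ffun 'I_N.+1 -> 'I_n}) x :
  [forall i : 'I_N.+1, (val i == 0%N) ==> (xs i == x)] = (xs ord0 == x).
Proof.
apply/forallP/idP => [H | H i]; first by have := H ord0.
apply/implyP => /eqP hi; have -> : i = ord0 by apply/val_inj.
exact: H.
Qed.

Lemma TT_fcons N (T : 'M[R]_n) a (t : {ffun 'I_N -> 'I_n}) :
  TT T (fcons a t) = (\prod_(j : 'I_N | val j == 0%N) T a (t j)) * TT T t.
Proof.
rewrite /TT big_ord_recl; congr (_ * _).
  rewrite big_mkcond big_ord_recl /= mul1r [in RHS]big_mkcond /=.
  by apply: eq_bigr => j _; rewrite fcons0 fconsS /= /bump leq0n add1n eqSS.
apply: eq_bigr => i _; rewrite big_mkcond big_ord_recl /= mul1r [in RHS]big_mkcond /=.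
by apply: eq_bigr => j _; rewrite !fconsS /= /bump !leq0n !add1n eqSS.
Qed.


Lemma sum_ffun0 (F : {ffun 'I_0 -> 'I_n} -> R) t0 : \sum_t F t = F t0.
Proof.
rewrite (big_pred1 t0) // => t /=; apply/esym/eqP/ffunP => -[] //.
Qed.

Lemma mass1 (T : 'M[R]_n) (HT1 : forall i, \sum_(j < n) T i j = 1) N x :
  \sum_(t : {ffun 'I_N -> 'I_n}) (\prod_(j : 'I_N | val j == 0%N) T x (t j)) * TT T t = 1.
Proof.
elim: N x => [|N IH] x.
  by rewrite (sum_ffun0 _ [ffun i : 'I_0 => x]) /TT !big_ord0 mulr1.
under eq_bigr => t _ do rewrite (big_pred1 ord0) //.
rewrite (partition_big (fun t : {ffun 'I_N.+1 -> 'I_n} => t ord0) predT) //=.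
rewrite -[RHS](HT1 x); apply: eq_bigr => w _.
transitivity (T x w * \sum_(t : {ffun 'I_N.+1 -> 'I_n} | t ord0 == w) TT T t).
  by rewrite big_distrr; apply: eq_bigr => t /eqP ->.
by rewrite sum_fcons_cond; under eq_bigr do rewrite TT_fcons; rewrite IH mulr1.
Qed.


Lemma CK (T : 'M[R]_n) (HT1 : forall i, \sum_(j < n) T i j = 1) N x (k : 'I_N.+1)
  (G : 'I_n -> R) :
  \sum_(xs : {ffun 'I_N.+1 -> 'I_n} | xs ord0 == x) TT T xs * G (xs k)
  = \sum_w (T ^+ k) x w * G w.
Proof.
elim: N x k => [|N IH] x k; rewrite sum_fcons_cond; under eq_bigr do rewrite TT_fcons;
  case: (unliftP ord0 k) => [j ->|->].
- by case: j.
- under eq_bigr do rewrite fcons0.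
  rewrite -big_distrl /= mass1 // mul1r expr0.
  rewrite (bigD1 x) //= big1 => [|w hw]; rewrite mxE ?eqxx ?mulr1n ?mul1r ?addr0 //.
  by rewrite eq_sym (negbTE hw) mulr0n mul0r.
- under eq_bigr do rewrite fconsS (big_pred1 ord0) //.
  rewrite (partition_big (fun t : {ffun 'I_N.+1 -> 'I_n} => t ord0) predT) //=.
  transitivity (\sum_w T x w * \sum_v (T ^+ j) w v * G v).
    apply: eq_bigr => w _; rewrite -IH big_distrr; apply: eq_bigr => t /eqP ->.
    by rewrite -mulrA.
  rewrite /= /bump leq0n add1n exprS -mulmxE.
  under [RHS]eq_bigr do rewrite mxE big_distrl.
  rewrite [RHS]exchange_big; apply: eq_bigr => w _; rewrite big_distrr.
  by apply: eq_bigr => v _; rewrite /= mulrA.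
- under eq_bigr do rewrite fcons0.
  rewrite -big_distrl /= mass1 // mul1r expr0.
  rewrite (bigD1 x) //= big1 => [|w hw]; rewrite mxE ?eqxx ?mulr1n ?mul1r ?addr0 //.
  by rewrite eq_sym (negbTE hw) mulr0n mul0r.
Qed.


Lemma emis_sum (Z Y : finType) (Q : Z -> R) (h : 'I_n -> Z -> Y)
  (HQ1 : \sum_(z : Z) Q z = 1) w : \sum_(v : Y) emis Q h w v = 1.
Proof. by rewrite -HQ1 (partition_big (h w) predT) //=. Qed.

Lemma marg (Z Y : finType) (T : 'M[R]_n) (HT1 : forall i, \sum_(j < n) T i j = 1)
  (Q : Z -> R) (h : 'I_n -> Z -> Y) (HQ1 : \sum_(z : Z) Q z = 1) N x (k : 'I_N) (c : Y) :
  \sum_(y : {ffun 'I_N -> Y}) (y k == c)%:R * condlaw T Q h N x y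
  = \sum_w (T ^+ k) x w * emis Q h w c.
Proof.
case: N k => [|N] k; first by case: k.
rewrite /condlaw.
under eq_bigr do rewrite big_distrr.
rewrite exchange_big /=.
rewrite (eq_bigl (fun xs : {ffun 'I_N.+1 -> 'I_n} => xs ord0 == x)); last first.
  by move=> xs; rewrite cond_eq.
rewrite -(CK HT1 x k (fun w => emis Q h w c)); apply: eq_bigr => xs _.
rewrite -/(TT T xs).
pose F i v := if i == k then (v == c)%:R * emis Q h (xs i) v else emis Q h (xs i) v.
transitivity (TT T xs * \sum_(y : {ffun 'I_N.+1 -> Y}) \prod_i F i (y i)).
  rewrite big_distrr; apply: eq_bigr => y _; rewrite mulrCA; congr (_ * _).
  rewrite (bigD1 k) // [RHS](bigD1 k) //= /F eqxx mulrA; congr (_ * _).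
  by apply: eq_bigr => i /negbTE ->.
congr (_ * _).
rewrite -bigA_distr_bigA (bigD1 k) //= [X in _ * X]big1 ?mulr1; last first.
  by move=> i /negbTE hi; rewrite /F hi emis_sum.
rewrite /F eqxx (bigD1 c) //= eqxx mul1r big1 ?addr0 //.
by move=> v /negbTE ->; rewrite mul0r.
Qed.

End P1.

Lemma powT (F : fieldType) n' (T : 'M[F]_n'.+1) k :
  exists c : 'I_n'.+1 -> F, T ^+ k = \sum_(i < n'.+1) c i *: T ^+ i.
Proof.
set cp := char_poly T.
set r := 'X^k %% cp.
exists (fun i => r`_i).
have hs : (size r <= n'.+1)%N.
  by rewrite -ltnS -(size_char_poly T) ltn_modp -size_poly_eq0 size_char_poly.
have hX : horner_mx T 'X^k = T ^+ k by rewrite rmorphXn /= horner_mx_X.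
have -> : T ^+ k = horner_mx T r.
  rewrite -hX {1}(divp_eq 'X^k cp) rmorphD rmorphM /= /cp Cayley_Hamilton.
  by rewrite mulr0 add0r.
transitivity (horner_mx T (\poly_(i < n'.+1) r`_i)).
  congr horner_mx; apply/polyP => j; rewrite coef_poly; case: ltnP => // hj.
  by rewrite nth_default // (leq_trans hs hj).
rewrite poly_def linear_sum /=; apply: eq_bigr => i _.
by rewrite linearZ /= rmorphXn /= horner_mx_X.
Qed.

Lemma krylov (F : fieldType) n' (T : 'M[F]_n'.+1) m (A : 'M[F]_(n'.+1, m)) N :
  (n'.+1 <= N)%N ->
  (\sum_(i < N) <<(T ^+ i *m A)^T>> == \sum_(i < n'.+1) <<(T ^+ i *m A)^T>>)%MS.
Proof.
move=> hN; apply/andP; split.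
  apply/sumsmx_subP => i _; rewrite genmxE.
  have [c ->] := powT T i.
  rewrite mulmx_suml linear_sum /=; apply/summx_sub => j _.
  rewrite -scalemxAl linearZ /= scalemx_sub //.
  by rewrite (sumsmx_sup j) // genmxE.
apply/sumsmx_subP => i _.
by rewrite (sumsmx_sup (widen_ord hN i)).
Qed.

Lemma rankMblk (R : realType) (n : nat) (Z Y : finType) (T : 'M[R]_n)
  (Q : Z -> R) (h : 'I_n -> Z -> Y) N :
  \rank (Mblk T Q h N) = \rank (\sum_(i < N) <<(T ^+ i *m Amx Q h)^T>>)%MS.
Proof.
rewrite -mxrank_tr /Mblk tr_mxrow; apply: eqmx_rank; apply/eqmxP; exact: eqmx_col.
Qed.

Theorem lemma1 (R : realType) (n : nat) (Z Y : finType) (T : 'M[R]_n)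
  (Q : Z -> R) (h : 'I_n -> Z -> Y)
  (HQ0 : forall z, 0 <= Q z) (HQ1 : \sum_(z : Z) Q z = 1)
  (HT0 : forall i j, 0 <= T i j) (HT1 : forall i, \sum_(j < n) T i j = 1) :
  (\rank (Mblk T Q h n) = n -> n_step_observable T Q h n) /\
  (\rank (Mblk T Q h n) <> n ->
     forall N : nat, (n <= N)%N -> \rank (Mblk T Q h N) = \rank (Mblk T Q h n)).
Proof.
split.
  move=> Hr f eps heps.
  set M := Mblk T Q h n.
  have full : row_full M^T by rewrite /row_full mxrank_tr Hr.
  pose fr : 'rV[R]_n := \row_(x < n) f x.
  have sub : (fr <= M^T)%MS by apply: submx_full.
  pose u := fr *m pinvmx M^T.
  have hu : u *m M^T = fr by apply: mulmxKpV.
  exists (fun y : {ffun 'I_n -> Y} => \sum_(c < \sum_(k < n) #|Y|)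
     u 0 c * (y (tagnat.sig1 c) == enum_val (tagnat.sig2 c))%:R).
  move=> x.
  have -> : f x = fr 0 x by rewrite mxE.
  rewrite -hu mxE.
  rewrite [X in _ - X](_ : _ = \sum_(c < \sum_(k < n) #|Y|) u 0 c * M^T c x) ?subrr ?normr0 //.
  under eq_bigr do rewrite big_distrl.
  rewrite exchange_big /=.
  apply: eq_bigr => c _.
  have Mc : M^T c x = \sum_(y : {ffun 'I_n -> Y})
      (y (tagnat.sig1 c) == enum_val (tagnat.sig2 c))%:R * condlaw T Q h n x y.
    rewrite (marg HT1 h HQ1) /M /Mblk /mxrow !mxE.
    by apply: eq_bigr => w _; rewrite mxE.
  rewrite Mc big_distrr; apply: eq_bigr => y _.
  by rewrite /= mulrA.
move=> Hn N hN.
case: n T Q h HQ0 HQ1 HT0 HT1 Hn hN => [|n'] T Q h HQ0 HQ1 HT0 HT1 Hn hN.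
  exfalso; apply: Hn; apply/eqP; rewrite -leqn0; exact: rank_leq_row.
rewrite !rankMblk; apply: eqmx_rank; apply: (krylov T (Amx Q h) hN).
Qed.
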